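(* The subspace $\mathbf{\Pi}$ is a graded sub-bialgebra of $(\textbf{W},\nabla_{\sqcup\!\sqcup},\iota_{\sqcup\!\sqcup},\Delta_\odot,\epsilon_\odot)$.
   Context: Let $\Bbbk$ be a field. A word is a finite sequence of positive integers. For a word $w=w_1\cdots w_m$ with $\max(w)\le n\in\mathbb{N}$, $[w,n]$ denotes the linear endomorphism of the shuffle algebra (span of all words) sending a word $v$ of length $n$ to $v_{w_1}\cdots v_{w_m}$ and other words to $0$; $\textbf{W}$ is the span of all such $[w,n]$, graded by $\deg[w,n]=m$. $\textbf{W}$ is a graded bialgebra with product $\nabla_{\sqcup\!\sqcup}([v,m]\otimes[w,n]) = [v\sqcup\!\sqcup (w\uparrow m), m+n]$ ($\sqcup\!\sqcup$ the shuffle product of words, $w\uparrow m$ adds $m$ to each letter), unit $\iota_{\sqcup\!\sqcup}(1)=[\emptyset,0]$, coproduct $\Delta_\odot([w,n])=\sum_{i=0}^m [w_1\cdots w_i,n]\otimes[w_{i+1}\cdots w_m,n]$ and counit $\epsilon_\odot([w,n])=1$ if $w=\emptyset$, else $0$. For $\pi$ in the symmetric group $S_{n+1}$ with simple transpositions $s_i=(i,i+1)$, let $\mathcal{R}(\pi)$ be its set of reduced words and $[\pi]=\sum_{w\in\mathcal{R}(\pi)}[w,n]\in\textbf{W}$. Let $\mathbf{\Pi}_n$ be the span of $\{[\pi]:\pi\in S_{n+1}\}$ and $\mathbf{\Pi}=\bigoplus_{n\in\mathbb{N}}\mathbf{\Pi}_n$. *)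

(* Defs.v *)
From mathcomp Require Import all_boot all_order all_algebra all_fingroup.
Set Implicit Arguments. Unset Strict Implicit. Unset Printing Implicit Defensive.
Import GRing.Theory.
Local Open Scope ring_scope.

(* Words are seq nat (letters are positive integers).  A basis element
   [w,n] of W is the pair (w, n).  An element of W is represented by its
   coefficient function on pairs (w,n); elements of the span are the finitely
   supported ones, and all elements we consider (elements of Pi) are such. *)

Definition Wt (K : fieldType) := (seq nat * nat) -> K.
Definition WWt (K : fieldType) := (seq nat * nat) -> (seq nat * nat) -> K.

(* shuffle product of words, as a list of words with multiplicity *)
Fixpoint shuffle (u v : seq nat) : seq (seq nat) :=
  match u with
  | [::] => [:: v]
  | a :: u' =>
      let fix sh (v : seq nat) : seq (seq nat) :=
        match v with
        | [::] => [:: u]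
        | b :: v' => map (cons a) (shuffle u' v) ++ map (cons b) (sh v')
        end in sh v
  end.

Definition shiftw (m : nat) (w : seq nat) : seq nat := map (addn m) w.

Fixpoint words (k n : nat) : seq (seq nat) :=
  match k with
  | 0 => [:: [::]]
  | k'.+1 => [seq i :: w | i <- iota 1 n, w <- words k' n]
  end.

(* product nabla: linear extension of
   [v,m] (x) [w,n] |-> [v shuffle (w up m), m+n].
   Coefficient of [u,N] in x*y: sum over the (finitely many) basis pairs
   [v,m], [w,N-m] with |v|+|w| = |u| that can contribute. *)
Definition mulW (K : fieldType) (x y : Wt K) : Wt K := fun b =>
  let u := b.1 in let N := b.2 in
  \sum_(m < N.+1) \sum_(k < (size u).+1)
    \sum_(v <- words k m) \sum_(w <- words (size u - k) (N - m))
      x (v, nat_of_ord m) * y (w, N - m) *+ count_mem u (shuffle v (shiftw m w)).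

Definition unitW (K : fieldType) : Wt K := fun b =>
  if (b.1 == [::]) && (b.2 == 0%N) then 1 else 0.

(* coproduct Delta_odot: linear extension of
   [w,n] |-> sum_i [w_1..w_i, n] (x) [w_(i+1)..w_m, n];
   the coefficient of [a,n] (x) [b,n'] is x(a ++ b, n) if n = n', else 0. *)
Definition comulW (K : fieldType) (x : Wt K) : WWt K := fun a b =>
  if a.2 == b.2 then x (a.1 ++ b.1, a.2) else 0.

(* homogeneous component of degree d (deg [w,n] = |w|) *)
Definition homog (K : fieldType) (d : nat) (x : Wt K) : Wt K := fun b =>
  if size b.1 == d then x b else 0.

(* simple transposition s_i = (i, i+1) of S_{n+1} = perms of {1..n+1},
   modelled on 'I_n.+1 = {0..n} (shifted by one) *)
Definition stransp (n i : nat) : 'S_n.+1 := tperm (inord i.-1) (inord i).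

Definition prodw (n : nat) (w : seq nat) : 'S_n.+1 :=
  (\prod_(i <- w) stransp n i)%g.

Definition reduced (n : nat) (pi : 'S_n.+1) (w : seq nat) : bool :=
  [&& all (fun i => 0 < i <= n)%N w, prodw n w == pi &
      all (fun k => all (fun u => prodw n u != pi) (words k n)) (iota 0 (size w))].

(* [pi] = sum_{w in R(pi)} [w, n] *)
Definition pi_elem (K : fieldType) (n : nat) (pi : 'S_n.+1) : Wt K := fun b =>
  if (b.2 == n) && reduced pi b.1 then 1 else 0.

Definition SymAll := {n : nat & 'S_n.+1}.

Definition inPi (K : fieldType) (x : Wt K) : Prop :=
  exists s : seq (K * SymAll),
    forall b, x b = \sum_(p <- s) p.1 * pi_elem K (projT2 p.2) b.

Definition inPiPi (K : fieldType) (t : WWt K) : Prop :=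
  exists s : seq (K * (SymAll * SymAll)),
    forall a b, t a b = \sum_(p <- s)
       p.1 * pi_elem K (projT2 p.2.1) a * pi_elem K (projT2 p.2.2) b.

(* Main.v *)
Require Import Defs.
From mathcomp Require Import all_boot all_order all_algebra all_fingroup.
From Stdlib Require Import FunctionalExtensionality.
Set Implicit Arguments. Unset Strict Implicit. Unset Printing Implicit Defensive.
From mathcomp Require Import zify.


Lemma mem_words k n u :
  (u \in words k n) = (size u == k) && all (fun i => 0 < i <= n) u.
Proof.
elim: k u => [|k IH] u /=; first by rewrite inE; case: u.
apply/allpairsP/idP => [[[i w] [hi hw ->]]|] /=.
  move: hw; rewrite IH eqSS => /andP[-> ->]; rewrite andbT /=.
  by move: hi; rewrite mem_iota /=; lia.
case: u => [|i w] //= /andP[hs /andP[hi hw]]; exists (i, w); split => //=.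
  by rewrite mem_iota; lia.
by rewrite IH -(eqSS (size w)) hs hw.
Qed.

Lemma uniq_words k n : uniq (words k n).
Proof.
elim: k => [|k IH] //=; apply: allpairs_uniq => //; first exact: iota_uniq.
by move=> [i w] [j v] _ _ /= [-> ->].
Qed.

Section Inv.
Variable N : nat.
Local Notation s_ := (stransp N).
Local Notation PT := ('S_N.+1).

Definition inr (i : nat) := (0 < i <= N).

Definition inv (p : PT) : nat :=
  \sum_(q : 'I_N.+1 * 'I_N.+1) ((q.1 < q.2) && (p q.2 < p q.1)).

Definition desc (p : PT) a := (p^-1)%g (inord a) < (p^-1)%g (inord a.-1).

Definition fsw a (x : nat) := if x == a.-1 then a else if x == a then a.-1 else x.
Ltac fsw_tac := rewrite /fsw; repeat (case: ifP => /eqP ?); lia.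

Lemma s_val a (x : 'I_N.+1) : 0 < a <= N -> nat_of_ord (s_ a x) = fsw a (nat_of_ord x).
Proof.
move=> /andP[a0 aN]; rewrite /stransp /fsw.
have h1 : nat_of_ord (inord a.-1 : 'I_N.+1) = a.-1 by rewrite inordK //; lia.
have h2 : nat_of_ord (inord a : 'I_N.+1) = a by rewrite inordK //; lia.
case: tpermP => [->|->|n1 n2]; rewrite ?h1 ?h2.
- by rewrite eqxx.
- have -> : (a == a.-1) = false by apply/eqP; lia.
  by rewrite eqxx.
- have -> : (val x == a.-1) = false.
    by apply/eqP => e; apply: n1; apply: val_inj; rewrite /= h1.
  have -> : (val x == a) = false.
    by apply/eqP => e; apply: n2; apply: val_inj; rewrite /= h2.
  by [].
Qed.

Lemma fsw_lt a u v : 0 < a ->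
  ~~ ((u == a.-1) && (v == a)) -> ~~ ((u == a) && (v == a.-1)) ->
  (fsw a v < fsw a u) = (v < u).
Proof.
move=> a0; rewrite /fsw.
case: (eqVneq u a.-1) => hu1; case: (eqVneq u a) => hu2;
case: (eqVneq v a.-1) => hv1; case: (eqVneq v a) => hv2 /=; lia.
Qed.

Lemma invM_s p a : 0 < a <= N ->
  if desc p a then (inv (p * s_ a)%g).+1 = inv p else inv (p * s_ a)%g = (inv p).+1.
Proof.
move=> ha; have a0 : 0 < a by case/andP: ha.
set J : 'I_N.+1 := inord a.-1; set J' : 'I_N.+1 := inord a.
have vJ : nat_of_ord J = a.-1 by rewrite /J inordK //; lia.
have vJ' : nat_of_ord J' = a by rewrite /J' inordK //; lia.
set X := (p^-1)%g J; set Y := (p^-1)%g J'.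
have pX : p X = J by rewrite /X permKV.
have pY : p Y = J' by rewrite /Y permKV.
have XY : X != Y.
  apply/eqP => e; have : p X = p Y by rewrite e.
  rewrite pX pY => /(congr1 (@nat_of_ord _)); rewrite vJ vJ'; lia.
set Z := if X < Y then (X, Y) else (Y, X).
have key : forall q : 'I_N.+1 * 'I_N.+1, q != Z ->
   ((q.1 < q.2) && ((p * s_ a)%g q.2 < (p * s_ a)%g q.1)) = ((q.1 < q.2) && (p q.2 < p q.1)).
  move=> [x y] /= qZ; case: (ltnP x y) => //= xy.
  rewrite !permM !s_val // fsw_lt //.
  - apply/negP => /andP[/eqP e1 /eqP e2].
    have ex : x = X by apply: (@perm_inj _ p); rewrite pX; apply: val_inj; rewrite /= e1 vJ.
    have ey : y = Y by apply: (@perm_inj _ p); rewrite pY; apply: val_inj; rewrite /= e2 vJ'.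
    by move: qZ; rewrite /Z ex ey -ex -ey xy eqxx.
  - apply/negP => /andP[/eqP e1 /eqP e2].
    have ex : x = Y by apply: (@perm_inj _ p); rewrite pY; apply: val_inj; rewrite /= e1 vJ'.
    have ey : y = X by apply: (@perm_inj _ p); rewrite pX; apply: val_inj; rewrite /= e2 vJ.
    move: qZ; rewrite /Z ex ey; move: xy; rewrite ex ey => xy.
    by rewrite ltnNge (ltnW xy) /= eqxx.
set R := \sum_(q | q != Z) ((q.1 < q.2) && (p q.2 < p q.1)).
have E1 : inv (p * s_ a)%g = ((Z.1 < Z.2) && ((p * s_ a)%g Z.2 < (p * s_ a)%g Z.1)) + R.
  rewrite /inv (bigD1 Z) //=; congr (_ + _); apply: eq_bigr => q hq; by rewrite key.
have E0 : inv p = ((Z.1 < Z.2) && (p Z.2 < p Z.1)) + R by rewrite /inv (bigD1 Z).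
rewrite E1 E0.
have sJ : s_ a J = J'.
  by apply: val_inj => /=; rewrite s_val // vJ vJ' /fsw eqxx.
have sJ' : s_ a J' = J.
  apply: val_inj => /=; rewrite s_val // vJ vJ' /fsw.
  have -> : (a == a.-1) = false by apply/eqP; lia.
  by rewrite eqxx.
rewrite /desc -/J -/J' -/X -/Y /Z.
have JJ' : J < J' by rewrite vJ vJ'; lia.
case: (ltnP X Y) => hXY /=.
- rewrite ltnNge (ltnW hXY) /= hXY /= !permM pX pY sJ sJ' JJ' ltnNge (ltnW JJ') /=.
  by rewrite add0n add1n.
- have hYX : Y < X by rewrite ltn_neqAle hXY andbT eq_sym.
  rewrite hYX /= !permM pX pY sJ sJ' JJ' ltnNge (ltnW JJ') /=.
  by rewrite add0n add1n.
Qed.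

Lemma inv1 : inv 1%g = 0.
Proof. by rewrite /inv big1 // => q _; rewrite !perm1; case: ltngtP. Qed.

Lemma prodw_cat w1 w2 : prodw N (w1 ++ w2) = (prodw N w1 * prodw N w2)%g.
Proof. by rewrite /prodw big_cat. Qed.

Lemma prodw_cons a w : prodw N (a :: w) = (s_ a * prodw N w)%g.
Proof. by rewrite /prodw big_cons. Qed.

Lemma prodw_nil : prodw N [::] = 1%g.
Proof. by rewrite /prodw big_nil. Qed.

Lemma prodw_rcons w a : prodw N (rcons w a) = (prodw N w * s_ a)%g.
Proof. by rewrite -cats1 prodw_cat /prodw big_seq1. Qed.

Lemma s2 a : (s_ a * s_ a)%g = 1%g.
Proof. exact: tperm2. Qed.

Lemma inv_s_le p a : 0 < a <= N -> inv (p * s_ a)%g <= (inv p).+1.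
Proof. move=> ha; have := invM_s p ha; case: desc => e; lia. Qed.

Lemma inv_bound w p : all inr w -> inv (p * prodw N w)%g <= inv p + size w.
Proof.
elim: w p => [|a w IH] p /=; first by rewrite prodw_nil mulg1 addn0.
case/andP=> ha hw; rewrite prodw_cons mulgA.
apply: (leq_trans (IH _ hw)); rewrite addnS -addSn leq_add2r; exact: inv_s_le.
Qed.

Lemma inv_prodw w : all inr w -> inv (prodw N w) <= size w.
Proof. by move=> hw; have := inv_bound 1%g hw; rewrite mul1g inv1. Qed.

Lemma incr_id (f : nat -> nat) : (forall k, k < N -> f k < f k.+1) ->
  (forall k, k <= N -> f k <= N) -> forall k, k <= N -> f k = k.
Proof.
move=> finc fb.
have up : forall k, k <= N -> k <= f k.
  elim=> [|k IH] hk //; have := IH (ltnW hk); have := finc k hk; lia.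
have up2 : forall j k, k + j <= N -> f k + j <= f (k + j).
  elim=> [|j IH] k hk; first by rewrite !addn0.
  have h1 : k + j <= N by lia.
  have h2 : k + j < N by lia.
  have := IH k h1; have := finc _ h2; rewrite !addnS; lia.
move=> k hk; have hk2 : k + (N - k) <= N by lia.
have := up2 (N - k) k hk2; rewrite subnKC //.
have := fb N (leqnn N); have := up k hk; lia.
Qed.

Lemma no_desc_id p : (forall a, 0 < a <= N -> ~~ desc p a) -> p = 1%g.
Proof.
move=> nd.
pose f k := nat_of_ord ((p^-1)%g (inord k : 'I_N.+1)).
have hf : forall k, k <= N -> f k = k.
  apply: incr_id.
  - move=> k hk; have := nd k.+1 ltac:(lia); rewrite /desc /= -/(f k) -/(f k.+1) -leqNgt.
    rewrite leq_eqVlt => /orP[/eqP e|] //.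
    have : (p^-1)%g (inord k.+1) = (p^-1)%g (inord k) :> 'I_N.+1 by apply: val_inj.
    move/perm_inj/(congr1 (@nat_of_ord _)); rewrite !inordK //; lia.
  - by move=> k _; rewrite /f; have := ltn_ord ((p^-1)%g (inord k : 'I_N.+1)).
have : (p^-1)%g = 1%g.
  apply/permP => x; rewrite perm1; apply: val_inj => /=.
  have hx : (x : nat) <= N by have := ltn_ord x; lia.
  by have := hf x hx; rewrite /f inord_val.
by move/(congr1 (@invg _)); rewrite invgK invg1.
Qed.

Lemma exists_word p : exists w, [/\ all inr w, prodw N w = p & size w = inv p].
Proof.
move: {2}(inv p) (erefl (inv p)) => k; elim: k p => [|k IH] p hk.
  exists [::]; split => //; rewrite prodw_nil; apply/esym/no_desc_id => a ha.
  apply/negP => hd; have := invM_s p ha; rewrite hd; lia.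
have [a ha hd] : exists2 a, 0 < a <= N & desc p a.
  case: (boolP [exists a : 'I_N, desc p a.+1]) => [/existsP [a ha]|/existsPn H].
    by exists a.+1 => //; rewrite ltn_ord.
  exfalso.
  have e : p = 1%g.
    apply: no_desc_id => a /andP[a0 aN]; have := H (@Ordinal N a.-1 ltac:(lia)).
    by rewrite /= prednK.
  by move: hk; rewrite e inv1.
have := invM_s p ha; rewrite hd => e.
have [w [hw pw sw]] := IH (p * s_ a)%g ltac:(lia).
exists (rcons w a); split.
- by rewrite all_rcons hw andbT; exact: ha.
- by rewrite prodw_rcons pw -mulgA s2 mulg1.
- by rewrite size_rcons sw; lia.
Qed.

Lemma inv_subadd x y : inv (x * y)%g <= inv x + inv y.
Proof.
have [w [hw <- <-]] := exists_word y; exact: inv_bound.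
Qed.

Lemma reducedE (p : PT) w :
  reduced p w = [&& all inr w, prodw N w == p & size w == inv p].
Proof.
rewrite /reduced; case hw: (all _ w) => //=; case: eqP => //= <-.
have hw' : all inr w by exact: hw.
apply/idP/idP.
- move=> /allP H; rewrite eqn_leq inv_prodw // andbT leqNgt; apply/negP => hlt.
  have [u [hu pu su]] := exists_word (prodw N w).
  have := H (inv (prodw N w)); rewrite mem_iota hlt => /(_ isT) /allP /(_ u).
  by rewrite mem_words su eqxx pu eqxx /= => /(_ hu).
- move=> /eqP hs; apply/allP => k; rewrite mem_iota add0n => /andP[_ hk].
  apply/allP => u; rewrite mem_words => /andP[/eqP su hu]; apply/negP => /eqP pu.
  have := inv_prodw (w := u) hu; rewrite pu -hs su; lia.
Qed.

Lemma red_of (p : PT) w : all inr w -> prodw N w = p -> size w = inv p -> reduced p w.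
Proof. by move=> h1 h2 h3; rewrite reducedE h1 h2 h3 !eqxx. Qed.

Lemma redP (p : PT) w : reduced p w -> [/\ all inr w, prodw N w = p & size w = inv p].
Proof. by rewrite reducedE => /and3P[h1 /eqP h2 /eqP h3]. Qed.

Lemma red_cat (p : PT) w1 w2 : reduced p (w1 ++ w2) ->
  reduced (prodw N w1) w1 /\ reduced (prodw N w2) w2.
Proof.
move/redP=> [h1 h2 h3]; move: h1; rewrite all_cat => /andP[h1 h1'].
move: h3; rewrite size_cat -h2 prodw_cat => h3.
have := inv_subadd (prodw N w1) (prodw N w2).
have := inv_prodw h1; have := inv_prodw h1' => e1 e2 e3.
by split; apply: red_of => //; lia.
Qed.

Lemma red_cat_intro (p q r : PT) w1 w2 : reduced q w1 -> reduced r w2 ->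
  (q * r)%g = p -> inv q + inv r = inv p -> reduced p (w1 ++ w2).
Proof.
move=> /redP[h1 <- h3] /redP[h1' <- h3'] e1 e2.
by apply: red_of; rewrite ?all_cat ?h1 ?h1' ?prodw_cat ?size_cat ?h3 ?h3'.
Qed.

Lemma red_swap (q p : PT) x y z : reduced q x -> reduced q y ->
  reduced p (x ++ z) = reduced p (y ++ z).
Proof.
move=> /redP[h1 h2 h3] /redP[h1' h2' h3'].
by rewrite !reducedE !all_cat h1 h1' !prodw_cat h2 h2' !size_cat h3 h3'.
Qed.

Lemma red_rcons (p : PT) w a : reduced p (rcons w a) ->
  [/\ inr a, reduced (p * s_ a)%g w & (inv (p * s_ a)%g).+1 = inv p].
Proof.
move/redP=> [h1 h2 h3]; move: h1; rewrite all_rcons => /andP[ha hw].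
have pw : prodw N w = (p * s_ a)%g by rewrite -h2 prodw_rcons -mulgA s2 mulg1.
have := inv_prodw hw; rewrite pw; have := invM_s p ha.
rewrite size_rcons in h3.
case: desc => e1 e2; last by lia.
by split => //; apply: red_of => //; lia.
Qed.

Lemma red_rcons_desc (p : PT) w a : reduced p (rcons w a) -> desc p a.
Proof.
move=> /red_rcons[ha _ e]; have := invM_s p ha; case: desc => //; lia.
Qed.

Lemma red_aa (p : PT) y a : reduced p (y ++ [:: a; a]) = false.
Proof.
apply/negP => /redP[h1 h2 h3]; move: h1; rewrite all_cat => /andP[hy _].
move: h2; rewrite prodw_cat prodw_cons /prodw big_seq1 -/(prodw N y).
rewrite (s2 a) mulg1 => h2.
have := inv_prodw hy; rewrite h2 -h3 size_cat /=; lia.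
Qed.

Definition fP (p : PT) k := nat_of_ord ((p^-1)%g (inord k : 'I_N.+1)).

Lemma s_inord c k : 0 < c <= N -> k <= N -> s_ c (inord k) = inord (fsw c k).
Proof.
move=> hc hk; have hf : fsw c k <= N by fsw_tac.
by apply: val_inj => /=; rewrite s_val // !inordK.
Qed.

Lemma fPM (p : PT) c k : 0 < c <= N -> k <= N -> fP (p * s_ c)%g k = fP p (fsw c k).
Proof.
move=> hc hk; rewrite /fP invMg permM /stransp tpermV -/(stransp N c) s_inord //.
Qed.

Lemma descE (p : PT) a : desc p a = (fP p a < fP p a.-1).
Proof. by []. Qed.

Lemma desc_comm (p : PT) a c : 0 < a <= N -> 0 < c <= N -> (a.+1 < c) || (c.+1 < a) ->
  desc (p * s_ c)%g a = desc p a.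
Proof.
move=> ha hc hac; rewrite !descE !fPM //; try lia.
have -> : fsw c a = a by fsw_tac.
have -> : fsw c a.-1 = a.-1 by fsw_tac.
by [].
Qed.

Lemma desc_adj (p : PT) a b : 0 < a <= N -> 0 < b <= N -> (b == a.+1) || (a == b.+1) ->
  desc p a -> desc p b -> desc (p * s_ a)%g b /\ desc (p * s_ a * s_ b)%g a.
Proof.
move=> ha hb hab; rewrite !descE !fPM //; try lia; try fsw_tac.
case/orP: hab => /eqP e; subst => h1 h2; rewrite /= in h1 h2 *.
- have e1 : fsw a a.+1 = a.+1 by fsw_tac.
  have e2 : fsw a a = a.-1 by fsw_tac.
  have e3 : fsw a.+1 a = a.+1 by fsw_tac.
  have e4 : fsw a.+1 a.-1 = a.-1 by fsw_tac.
  have e6 : fsw a a.-1 = a by fsw_tac.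
  rewrite e3 e4 e1 e2 e6; split; lia.
- have e1 : fsw b b.+1 = b.+1 by fsw_tac.
  have e2 : fsw b b = b.-1 by fsw_tac.
  have e3 : fsw b.+1 b = b.+1 by fsw_tac.
  have e4 : fsw b.+1 b.-1 = b.-1 by fsw_tac.
  have e5 : fsw b.+1 b.+1 = b by fsw_tac.
  rewrite ?e1 ?e2 ?e3 ?e4 ?e5 ?e1 ?e2 ?e3 ?e4 ?e5; split; lia.
Qed.

Lemma sV a : ((s_ a)^-1)%g = s_ a.
Proof. exact: tpermV. Qed.

Lemma s_conj a c : 0 < a <= N -> 0 < c <= N ->
  (s_ a * s_ c * s_ a)%g = tperm (inord (fsw a c.-1)) (inord (fsw a c)) :> PT.
Proof.
move=> ha hc; rewrite -{1}(sV a) -mulgA -conjgE /stransp tpermJ.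
by rewrite -!/(stransp N _) !s_inord //; lia.
Qed.

Lemma comm_s a c : 0 < a <= N -> 0 < c <= N -> (a.+1 < c) || (c.+1 < a) ->
  (s_ a * s_ c)%g = (s_ c * s_ a)%g.
Proof.
move=> ha hc hac; have := s_conj ha hc.
have -> : fsw a c.-1 = c.-1 by fsw_tac.
have -> : fsw a c = c by fsw_tac.
move=> e; have e' : s_ c = (s_ a * s_ c * s_ a)%g by rewrite e.
by rewrite [in RHS]e' -!mulgA s2 mulg1.
Qed.

Lemma braid_s a b : 0 < a <= N -> 0 < b <= N -> (b == a.+1) || (a == b.+1) ->
  (s_ a * s_ b * s_ a)%g = (s_ b * s_ a * s_ b)%g.
Proof.
move=> ha hb hab; rewrite s_conj // s_conj //.
case/orP: hab => /eqP e; subst; rewrite /=.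
- have -> : fsw a a = a.-1 by fsw_tac.
  have -> : fsw a a.+1 = a.+1 by fsw_tac.
  have -> : fsw a.+1 a.-1 = a.-1 by fsw_tac.
  by have -> : fsw a.+1 a = a.+1 by fsw_tac.
- have -> : fsw b.+1 b = b.+1 by fsw_tac.
  have -> : fsw b.+1 b.-1 = b.-1 by fsw_tac.
  have -> : fsw b b = b.-1 by fsw_tac.
  by have -> : fsw b b.+1 = b.+1 by fsw_tac.
Qed.

Lemma prodw1 a : prodw N [:: a] = s_ a.
Proof. by rewrite /prodw big_seq1. Qed.

Lemma sK (y : PT) a : (y * s_ a * s_ a)%g = y.
Proof. by rewrite -mulgA s2 mulg1. Qed.

Lemma red_comm (p : PT) y a b : inr a -> inr b -> (a.+1 < b) || (b.+1 < a) ->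
  reduced p (y ++ [:: b; a]) = reduced p (y ++ [:: a; b]).
Proof.
move=> ha hb hab; rewrite !reducedE !all_cat /= ha hb !prodw_cat !prodw_cons !prodw_nil !mulg1 !size_cat /=.
by rewrite (comm_s ha hb hab).
Qed.

Lemma red_braid (p : PT) y a b : inr a -> inr b -> (b == a.+1) || (a == b.+1) ->
  reduced p (y ++ [:: a; b; a]) = reduced p (y ++ [:: b; a; b]).
Proof.
move=> ha hb hab; rewrite !reducedE !all_cat /= ha hb !prodw_cat !prodw_cons !prodw_nil !mulg1 !size_cat /=.
by have e := braid_s ha hb hab; rewrite -!mulgA in e; rewrite e.
Qed.
End Inv.

Section Prod.
Variables m0 n0 N : nat.
Hypothesis hN : N <= m0 + n0.

Definition Lw u := filter (fun x => x <= m0) u.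
Definition Uw u := map (fun x => x - m0) (filter (fun x => ~~ (x <= m0)) u).
Definition inS (sg : 'S_m0.+1) (tu : 'S_n0.+1) u := reduced sg (Lw u) && reduced tu (Uw u).

Lemma Lw_cat x y : Lw (x ++ y) = Lw x ++ Lw y.
Proof. by rewrite /Lw filter_cat. Qed.
Lemma Uw_cat x y : Uw (x ++ y) = Uw x ++ Uw y.
Proof. by rewrite /Uw filter_cat map_cat. Qed.

Lemma inS_swap sg0 tu0 sg tu x y z : inS sg0 tu0 x -> inS sg0 tu0 y ->
  inS sg tu (x ++ z) = inS sg tu (y ++ z).
Proof.
move=> /andP[h1 h2] /andP[h3 h4].
by rewrite /inS !Lw_cat !Uw_cat (red_swap sg (Lw z) h1 h3) (red_swap tu (Uw z) h2 h4).
Qed.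

Lemma inS_prefix sg tu x z : inS sg tu (x ++ z) -> inS (prodw m0 (Lw x)) (prodw n0 (Uw x)) x.
Proof.
by rewrite /inS Lw_cat Uw_cat => /andP[/red_cat[h1 _] /red_cat[h2 _]]; rewrite h1 h2.
Qed.



Lemma inS_comm sg tu x a b : inr N a -> inr N b -> (a.+1 < b) || (b.+1 < a) ->
  inS sg tu (x ++ [:: b; a]) = inS sg tu (x ++ [:: a; b]).
Proof.
move=> ha hb hab; rewrite /inS !Lw_cat !Uw_cat /Lw /Uw /=; move: (ha) (hb); rewrite /inr => ha1 hb1.
case: (leqP a m0) => ha'; case: (leqP b m0) => hb' //=.
- by rewrite (red_comm (N:=m0)) // /inr; lia.
- rewrite (red_comm tu _ (a:=a - m0) (b:=b-m0)) // /inr; lia.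
Qed.

Lemma inS_braid sg tu x a b : inr N a -> inr N b -> (b == a.+1) || (a == b.+1) ->
  inS sg tu (x ++ [:: a; b; a]) -> inS sg tu (x ++ [:: b; a; b]).
Proof.
move=> ha hb hab; rewrite /inS !Lw_cat !Uw_cat /Lw /Uw /=; move: (ha) (hb); rewrite /inr => ha1 hb1.
case: (leqP a m0) => ha'; case: (leqP b m0) => hb' //=.
- by rewrite (red_braid (N:=m0)) // /inr; lia.
- by rewrite red_aa.
- by rewrite red_aa andbF.
- rewrite (red_braid tu _ (a:=a - m0) (b:=b-m0)) // /inr; lia.
Qed.

Lemma adj_of a b : a != b -> ~~ ((a.+1 < b) || (b.+1 < a)) -> (b == a.+1) || (a == b.+1).
Proof. lia. Qed.

Lemma thmB k : forall (pi : 'S_N.+1) u u' sg tu, inv pi = k ->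
  reduced pi u -> reduced pi u' -> inS sg tu u -> inS sg tu u'.
Proof.
elim/ltn_ind: k => k IH pi u u' sg tu hk hu hu' hS.
case/lastP: u hu hS => [|u0 a] hu hS.
  have [_ _ s0] := redP hu; have [_ _ s1] := redP hu'.
  by move: s1; rewrite -s0 => /size0nil ->.
case/lastP: u' hu' => [|u0' b] hu'.
  have [_ _ s0] := redP hu; have [_ _ s1] := redP hu'.
  by move: s0; rewrite -s1 size_rcons.
have [ha hu0 ea] := red_rcons hu; have [hb hu0' eb] := red_rcons hu'.
rewrite -!cats1 in hS *.
have hS0 := inS_prefix hS.
case: (eqVneq a b) => [eab|nab].
  subst b.
  have lt : inv (pi * stransp N a)%g < k by rewrite -hk -ea.
  have S1 := IH _ lt _ _ _ _ _ erefl hu0 hu0' hS0.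
  by rewrite (inS_swap _ _ _ S1 hS0).
have da : desc pi a by have := invM_s pi ha; case: desc => //; lia.
have db : desc pi b by have := invM_s pi hb; case: desc => //; lia.
case: (boolP ((a.+1 < b) || (b.+1 < a))) => hfar.
- have dab : desc (pi * stransp N a)%g b.
    by rewrite desc_comm // orbC.
  set q := (pi * stransp N a * stransp N b)%g.
  have eq1 : (inv q).+1 = inv (pi * stransp N a)%g by have := invM_s (pi * stransp N a)%g hb; rewrite dab.
  have [x [hx px sx]] := exists_word q.
  have r1 : reduced (pi * stransp N a)%g (x ++ [:: b]).
    apply: red_of; first by rewrite all_cat hx /= andbT; exact: hb.
      by rewrite prodw_cat px prodw1 /q sK.
    by rewrite size_cat sx /= addn1.
  have lt1 : inv (pi * stransp N a)%g < k by rewrite -hk -ea.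
  have S1 := IH _ lt1 _ _ _ _ _ erefl hu0 r1 hS0.
  have S2 : inS sg tu (x ++ [:: b; a]) by rewrite -[[:: b; a]]cat1s catA (inS_swap _ _ _ S1 hS0).
  have S3 : inS sg tu (x ++ [:: a; b]) by rewrite -inS_comm.
  have S4 := @inS_prefix sg tu (x ++ [:: a]) [:: b] ltac:(by rewrite -catA).
  have e := comm_s ha hb hfar.
  have r2 : reduced (pi * stransp N b)%g (x ++ [:: a]).
    apply: red_of; first by rewrite all_cat hx /= andbT; exact: ha.
      by rewrite prodw_cat px prodw1 /q -(mulgA pi) e mulgA sK.
    by rewrite size_cat sx /= addn1; apply: succn_inj; rewrite eb -ea -eq1.
  have lt2 : inv (pi * stransp N b)%g < k by rewrite -hk -eb.
  have S5 := IH _ lt2 _ _ _ _ _ erefl r2 hu0' S4.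
  by rewrite (inS_swap _ _ _ S5 S4) -catA.
- have adj := adj_of nab hfar.
  have [d1 d2] := desc_adj ha hb adj da db.
  set q := (pi * stransp N a * stransp N b * stransp N a)%g.
  have eq1 : (inv (pi * stransp N a * stransp N b)%g).+1 = inv (pi * stransp N a)%g.
    by have := invM_s (pi * stransp N a)%g hb; rewrite d1.
  have eq2 : (inv q).+1 = inv (pi * stransp N a * stransp N b)%g.
    by have := invM_s (pi * stransp N a * stransp N b)%g ha; rewrite d2.
  have [x [hx px sx]] := exists_word q.
  have r1 : reduced (pi * stransp N a)%g (x ++ [:: a; b]).
    apply: red_of; first by rewrite all_cat hx /= andbT; apply/andP; split; [exact: ha|exact: hb].
      by rewrite prodw_cat px !prodw_cons prodw_nil mulg1 /q !mulgA !sK.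
    by rewrite size_cat sx /= addn2 -eq1 -eq2.
  have lt1 : inv (pi * stransp N a)%g < k by rewrite -hk -ea.
  have S1 := IH _ lt1 _ _ _ _ _ erefl hu0 r1 hS0.
  have S2 : inS sg tu (x ++ [:: a; b; a]) by rewrite -[[:: a; b; a]]/([:: a; b] ++ [:: a]) catA (inS_swap _ _ _ S1 hS0).
  have S3 := inS_braid ha hb adj S2.
  have S4 := @inS_prefix sg tu (x ++ [:: b; a]) [:: b] ltac:(by rewrite -catA).
  have e := braid_s ha hb adj.
  have r2 : reduced (pi * stransp N b)%g (x ++ [:: b; a]).
    apply: red_of; first by rewrite all_cat hx /= andbT; apply/andP; split; [exact: hb|exact: ha].
      rewrite prodw_cat px !prodw_cons prodw_nil mulg1 /q !mulgA.
      by rewrite -(mulgA pi (stransp N a)) -(mulgA pi _ (stransp N a)) e !mulgA !sK.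
    by rewrite size_cat sx /= addn2; apply: succn_inj; rewrite eb -ea -eq1 -eq2.
  have lt2 : inv (pi * stransp N b)%g < k by rewrite -hk -eb.
  have S5 := IH _ lt2 _ _ _ _ _ erefl r2 hu0' S4.
  by rewrite (inS_swap _ _ _ S5 S4) -catA.
Qed.

Lemma thmA sg tu u : inS sg tu u -> all (inr N) u -> reduced (prodw N u) u.
Proof.
elim/last_ind: u sg tu => [|u0 a IH] sg tu hS hall.
  by apply: red_of => //; rewrite prodw_nil inv1.
rewrite -cats1 in hS hall *.
have hS0 := inS_prefix hS.
have hu0 : reduced (prodw N u0) u0.
  by apply: IH hS0 _; move: hall; rewrite all_cat => /andP[].
have ha : inr N a by move: hall; rewrite all_cat /= andbT => /andP[].
have [hw0 pw0 sw0] := redP hu0.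
set p0 := prodw N u0 in hu0 pw0 sw0 *.
have := invM_s p0 ha; case: ifP => hd e.
- exfalso.
  have [y [hy py sy]] := exists_word (p0 * stransp N a)%g.
  have r : reduced p0 (y ++ [:: a]).
    apply: red_of; first by rewrite all_cat hy /= andbT; exact: ha.
      by rewrite prodw_cat py prodw1 sK.
    by rewrite size_cat sy /= addn1.
  have hSy := thmB erefl hu0 r hS0.
  move: hS hSy; rewrite /inS !Lw_cat !Uw_cat /Lw /Uw /=.
  case: (leqP a m0) => ha' /=; rewrite ?cats0 ?cats1.
    move=> /andP[h1 _] /andP[h2 _].
    have [_ h3 e3] := red_rcons h1; have [_ h4 e4] := red_rcons h2.
    have [_ p3 _] := redP h3; rewrite -/(Lw u0) p3 sK in e4.
    by move: e3; rewrite -e4 => /eqP; rewrite -addn2 -{2}(addn0 (inv _)) eqn_add2l.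
  move=> /andP[_ h1] /andP[_ h2].
  have [_ h3 e3] := red_rcons h1; have [_ h4 e4] := red_rcons h2.
  have [_ p3 _] := redP h3; rewrite -/(Uw u0) p3 sK in e4.
  by move: e3; rewrite -e4 => /eqP; rewrite -addn2 -{2}(addn0 (inv _)) eqn_add2l.
- apply: red_of => //; rewrite prodw_cat prodw1 -/p0.
  by rewrite size_cat sw0 e addn1.
Qed.
End Prod.

Import GRing.Theory.

Lemma sh_cc a u b v : shuffle (a::u) (b::v) = map (cons a) (shuffle u (b::v)) ++ map (cons b) (shuffle (a::u) v).
Proof. by []. Qed.

Lemma count_map_cons a c u (S : seq (seq nat)) :
  count_mem (c :: u) (map (cons a) S) = if a == c then count_mem u S else 0%N.
Proof.
elim: S => [|x S IH] /=; first by case: ifP.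
by rewrite IH eqseq_cons; case: eqP.
Qed.

Lemma count_map_nil a (S : seq (seq nat)) : count_mem [::] (map (cons a) S) = 0%N.
Proof. by elim: S. Qed.

Lemma filter_nil_all (P : pred nat) u : filter P u = [::] -> all (fun x => ~~ P x) u.
Proof. by elim: u => //= x u IH; case: ifP => // ->. Qed.

Lemma all_filter_id (P : pred nat) u : all P u -> filter P u = u.
Proof. by move/all_filterP. Qed.

Lemma filter_all_nil (P : pred nat) u : all (fun x => ~~ P x) u -> filter P u = [::].
Proof. by elim: u => //= x u IH /andP[/negbTE -> /IH]. Qed.

Lemma filter_nP_nil (P : pred nat) v : all P v -> filter (fun x => ~~ P x) v = [::].
Proof. by elim: v => //= x v IH /andP[-> /IH]. Qed.

Lemma count_shuffle (P : pred nat) v w u : all P v -> all (fun x => ~~ P x) w ->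
  count_mem u (shuffle v w) = ((filter P u == v) && (filter (fun x => ~~ P x) u == w)).
Proof.
elim: v w u => [|a v IHv] w u hv.
  move=> hw; rewrite /= addn0; congr (nat_of_bool _).
  apply/eqP/andP => [<-|[/eqP h1 /eqP h2]].
    by rewrite filter_all_nil // all_filter_id.
  by rewrite -h2 all_filter_id //; apply: filter_nil_all.
case/andP: hv => ha hv.
elim: w u => [|b w IHw] u hw.
  rewrite /= addn0; congr (nat_of_bool _).
  apply/eqP/andP => [<-|[/eqP h1 /eqP h2]].
    by rewrite /= ha all_filter_id // filter_nP_nil // eqxx.
  have : all P u.
    apply/allP => x hx; apply/negPn/negP => hx'.
    by move: h2 => /(f_equal (fun s => x \in s)); rewrite mem_filter hx' hx.
  by move/all_filterP; rewrite h1.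
case/andP: hw => hb hw.
rewrite sh_cc count_cat.
case: u => [|c u].
  by rewrite !count_map_nil.
rewrite !count_map_cons IHv /= ?ha ?hb ?hv ?hw //.
rewrite IHw /= ?ha ?hv //.
case: (boolP (P c)) => hc /=.
- have -> : (b == c) = false by apply/eqP => e; move: hb; rewrite e hc.
  rewrite addn0 eqseq_cons.
  by rewrite [c == a]eq_sym; case: (a == c).
- have -> : (a == c) = false by apply/eqP => e; move: hc; rewrite -e ha.
  rewrite add0n eqseq_cons.
  by rewrite [c == b]eq_sym; case: (b == c); rewrite /= ?andbF.
Qed.

Section Lin.
Variable K : fieldType.



Lemma size_LU m0 u : (size (Lw m0 u) + size (Uw m0 u))%N = size u.
Proof. by rewrite /Lw /Uw size_map !size_filter; exact: count_predC. Qed.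

Lemma allU_inr m0 n0 (sg : 'S_m0.+1) (tu : 'S_n0.+1) u N : (m0 <= N)%N -> inS sg tu u ->
  all (fun i => 0 < i <= N - m0)%N (Uw m0 u) = all (inr N) u.
Proof.
move=> hm /andP[/redP[hl _ _] /redP[hu _ _]].
apply/allP/allP => H x hx.
- case: (leqP x m0) => h.
    have : x \in Lw m0 u by rewrite mem_filter h hx.
    move/(allP hl); rewrite /inr; lia.
  have : x - m0 \in Uw m0 u by apply: map_f; rewrite mem_filter -ltnNge h hx.
  move/H; rewrite /inr; lia.
- move: hx => /mapP[y]; rewrite mem_filter => /andP[hy1 hy2] ->.
  have := H y hy2; rewrite /inr; lia.
Qed.

Local Open Scope ring_scope.

Lemma sum_ind (s : seq (seq nat)) a : uniq s ->
  \sum_(v <- s) (if v == a then 1 else 0 : K) = (a \in s)%:R.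
Proof.
elim: s => [|x s IH] /=; first by rewrite big_nil.
case/andP=> hx hs; rewrite big_cons IH // in_cons.
case: (eqVneq x a) => [e|ne] /=; last by rewrite add0r.
by rewrite -e (negbTE hx) addr0.
Qed.

Lemma mulW_pi m0 n0 (sg : 'S_m0.+1) (tu : 'S_n0.+1) u N :
  mulW (pi_elem K sg) (pi_elem K tu) (u, N) =
  if [&& m0 <= N, N + (N.+1 - m0) %% N.+1 == n0, inS sg tu u & all (inr N) u]%N
  then 1 else 0.
Proof.
rewrite /mulW /pi_elem /=.
case: (ltnP m0 N.+1) => hm; last first.
  have -> : (m0 <= N)%N = false by apply/negbTE; rewrite -ltnNge.
  rewrite /=.
  apply: big1 => m _; apply: big1 => k _; apply: big1 => v _; apply: big1 => w _.
  have -> : (nat_of_ord m == m0) = false by apply/eqP => e; have := ltn_ord m; lia.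
  by rewrite mul0r mul0rn.
rewrite (bigD1 (Ordinal hm)) //= [X in _ + X = _]big1 ?addr0; last first.
  move=> m hne; apply: big1 => k _; apply: big1 => v _; apply: big1 => w _.
  have -> : (nat_of_ord m == m0) = false.
    by apply/eqP => e; move/eqP: hne; apply; apply: val_inj.
  by rewrite mul0r mul0rn.
have hm' : (m0 <= N)%N by [].
rewrite eqxx hm' /=.
case: (eqVneq (N + (N.+1 - m0) %% N.+1)%N n0) => [eN|nN] /=; last first.
  apply: big1 => k _; apply: big1 => v _; apply: big1 => w _.
  by rewrite mulr0 mul0rn.
have term : forall v w,
  (if reduced sg v then 1 else 0) * (if reduced tu w then 1 else 0) *+
     count_mem u (shuffle v (shiftw m0 w)) =
  (if (v == Lw m0 u) && (w == Uw m0 u) && inS sg tu u then 1 else 0 : K).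
  move=> v w /=.
  case hv: (reduced sg v); last first.
    rewrite mul0r mul0rn; case: ifP => //.
    by case/andP => /andP[/eqP ev _] /andP[h _]; move: hv; rewrite ev h.
  case hw: (reduced tu w); last first.
    rewrite mulr0 mul0rn; case: ifP => //.
    by case/andP => /andP[_ /eqP ew] /andP[_ h]; move: hw; rewrite ew h.
  rewrite mul1r.
  have [hv1 _ _] := redP hv; have [hw1 _ _] := redP hw.
  rewrite (count_shuffle (P := fun x => x <= m0)%N); last first.
    apply/allP => x /mapP [y hy ->] /=; have := allP hw1 y hy; rewrite /inr; lia.
    apply/allP => x hx /=; have := allP hv1 x hx; rewrite /inr; lia.
  have e1 : ([seq x <- u | ~~ (x <= m0)%N] == shiftw m0 w) = (w == Uw m0 u).
    apply/eqP/eqP => [e|->].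
      by rewrite /Uw e /shiftw -map_comp map_id_in // => x _ /=; rewrite addKn.
    rewrite /shiftw /Uw -map_comp map_id_in // => x; rewrite mem_filter => /andP[hx _] /=.
    by rewrite subnKC //; lia.
  rewrite e1 -/(Lw m0 u) [v == _]eq_sym.
  case: eqP => [ev|] /=; last by rewrite mulr0n.
  case: eqP => [ew|] /=; last by rewrite mulr0n.
  by rewrite /inS ev -ew hv hw.
rewrite (eq_bigr (fun k : 'I_(size u).+1 => \sum_(v <- words k m0) \sum_(w <- words (size u - k) (N - m0))
   (if (v == Lw m0 u) && (w == Uw m0 u) && inS sg tu u then 1 else 0 : K))); last first.
  by move=> k _; apply: eq_bigr => v _; apply: eq_bigr => w _; exact: term.
case hS: (inS sg tu u); last first.
  by rewrite /=; apply: big1 => k _; apply: big1 => v _; apply: big1 => w _; rewrite andbF.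
rewrite /=.
have hS' := hS; case/andP: hS' => hL hU; have [hl _ _] := redP hL.
transitivity (\sum_(k < (size u).+1)
   ((Lw m0 u \in words k m0)%:R * (Uw m0 u \in words (size u - k) (N - m0))%:R : K)).
  apply: eq_bigr => k _.
  rewrite -(sum_ind _ (uniq_words k m0)) -(sum_ind _ (uniq_words _ _)) mulr_suml.
  apply: eq_bigr => v _; rewrite mulr_sumr; apply: eq_bigr => w _.
  by rewrite andbT; case: (v == _); case: (w == _); rewrite ?mul1r ?mul0r.
rewrite -(allU_inr hm' hS).
have hl' : all (fun i => 0 < i <= m0)%N (Lw m0 u) := hl.
case hA: (all (fun i => 0 < i <= N - m0)%N (Uw m0 u)); last first.
  by apply: big1 => k _; rewrite !mem_words hA andbF mulr0.
have hsL : (size (Lw m0 u) < (size u).+1)%N by rewrite ltnS -(size_LU m0 u) leq_addr.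
rewrite (bigD1 (Ordinal hsL)) //= big1 ?addr0.
  rewrite !mem_words hl' hA eqxx /=.
  have -> : (size (Uw m0 u) == size u - size (Lw m0 u))%N.
    by rewrite -(size_LU m0 u) addKn.
  by rewrite mulr1.
move=> k hk; rewrite !mem_words.
have -> : (size (Lw m0 u) == k) = false.
  by apply/negbTE; apply: contra hk => /eqP e; apply/eqP; apply: val_inj.
by rewrite mul0r.
Qed.
End Lin.

Section Main.
Variable K : fieldType.
Local Open Scope ring_scope.

Lemma inPi_ext (x y : Wt K) : (forall b, x b = y b) -> inPi x -> inPi y.
Proof. by move=> e [s hs]; exists s => b; rewrite -e; exact: hs. Qed.

Lemma inPi_sum (I : Type) (r : seq I) (c : I -> K) (F : I -> Wt K) :
  (forall i, inPi (F i)) -> inPi (fun b => \sum_(i <- r) c i * F i b).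
Proof.
move=> H; elim: r => [|i r [t ht]].
  by exists [::] => b; rewrite !big_nil.
have [s hs] := H i.
exists (map (fun p => (c i * p.1, p.2)) s ++ t) => b.
rewrite big_cons big_cat big_map ht hs mulr_sumr /=; congr (_ + _).
by apply: eq_bigr => p _; rewrite mulrA.
Qed.

Lemma inPiPi_ext (x y : WWt K) : (forall a b, x a b = y a b) -> inPiPi x -> inPiPi y.
Proof. by move=> e [s hs]; exists s => a b; rewrite -e; exact: hs. Qed.

Lemma inPiPi_sum (I : Type) (r : seq I) (c : I -> K) (F : I -> WWt K) :
  (forall i, inPiPi (F i)) -> inPiPi (fun a b => \sum_(i <- r) c i * F i a b).
Proof.
move=> H; elim: r => [|i r [t ht]].
  by exists [::] => a b; rewrite !big_nil.
have [s hs] := H i.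
exists (map (fun p => (c i * p.1, p.2)) s ++ t) => a b.
rewrite big_cons big_cat big_map ht hs mulr_sumr /=; congr (_ + _).
by apply: eq_bigr => p _; rewrite !mulrA.
Qed.

Lemma inPi_pe (p : SymAll) : inPi (pi_elem K (projT2 p)).
Proof. by exists [:: (1, p)] => b; rewrite big_seq1 mul1r. Qed.

Lemma mulW_ext (x x' y y' : Wt K) b : (forall c, x c = x' c) -> (forall c, y c = y' c) ->
  mulW x y b = mulW x' y' b.
Proof.
move=> e1 e2; have -> : x = x' by apply: functional_extensionality.
by have -> : y = y' by apply: functional_extensionality.
Qed.

Lemma mulW_addl (x1 x2 y : Wt K) b :
  mulW (fun c => x1 c + x2 c) y b = mulW x1 y b + mulW x2 y b.
Proof.
rewrite /mulW -big_split; apply: eq_bigr => m _; rewrite -big_split; apply: eq_bigr => k _.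
rewrite -big_split; apply: eq_bigr => v _; rewrite -big_split; apply: eq_bigr => w _ /=.
by rewrite mulrDl mulrnDl.
Qed.

Lemma mulW_addr (x y1 y2 : Wt K) b :
  mulW x (fun c => y1 c + y2 c) b = mulW x y1 b + mulW x y2 b.
Proof.
rewrite /mulW -big_split; apply: eq_bigr => m _; rewrite -big_split; apply: eq_bigr => k _.
rewrite -big_split; apply: eq_bigr => v _; rewrite -big_split; apply: eq_bigr => w _ /=.
by rewrite mulrDr mulrnDl.
Qed.

Lemma mulW_scalel (x y : Wt K) c b : mulW (fun z => c * x z) y b = c * mulW x y b.
Proof.
rewrite /mulW mulr_sumr; apply: eq_bigr => m _; rewrite mulr_sumr; apply: eq_bigr => k _.
rewrite mulr_sumr; apply: eq_bigr => v _; rewrite mulr_sumr; apply: eq_bigr => w _ /=.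
by rewrite mulrnAr mulrA.
Qed.

Lemma mulW_scaler (x y : Wt K) c b : mulW x (fun z => c * y z) b = c * mulW x y b.
Proof.
rewrite /mulW mulr_sumr; apply: eq_bigr => m _; rewrite mulr_sumr; apply: eq_bigr => k _.
rewrite mulr_sumr; apply: eq_bigr => v _; rewrite mulr_sumr; apply: eq_bigr => w _ /=.
by rewrite mulrnAr mulrCA.
Qed.

Lemma mulW_0l (y : Wt K) b : mulW (fun _ => 0) y b = 0.
Proof.
apply: big1 => m _; apply: big1 => k _; apply: big1 => v _; apply: big1 => w _.
by rewrite mul0r mul0rn.
Qed.

Lemma mulW_0r (x : Wt K) b : mulW x (fun _ => 0) b = 0.
Proof.
apply: big1 => m _; apply: big1 => k _; apply: big1 => v _; apply: big1 => w _.
by rewrite mulr0 mul0rn.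
Qed.

Lemma mulW_linl (I : Type) (r : seq I) (c : I -> K) (F : I -> Wt K) y b :
  mulW (fun z => \sum_(i <- r) c i * F i z) y b = \sum_(i <- r) c i * mulW (F i) y b.
Proof.
elim: r => [|i r IH].
  transitivity (mulW (fun _ => 0) y b).
    by apply: mulW_ext => z //; rewrite big_nil.
  by rewrite mulW_0l big_nil.
rewrite big_cons -IH -mulW_scalel -mulW_addl; apply: mulW_ext => z //.
by rewrite big_cons.
Qed.

Lemma mulW_linr (I : Type) (r : seq I) (c : I -> K) (F : I -> Wt K) x b :
  mulW x (fun z => \sum_(i <- r) c i * F i z) b = \sum_(i <- r) c i * mulW x (F i) b.
Proof.
elim: r => [|i r IH].
  transitivity (mulW x (fun _ => 0) b).
    by apply: mulW_ext => z //; rewrite big_nil.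
  by rewrite mulW_0r big_nil.
rewrite big_cons -IH -mulW_scaler -mulW_addr; apply: mulW_ext => z //.
by rewrite big_cons.
Qed.

End Main.

Section Main2.
Variable K : fieldType.
Local Open Scope ring_scope.

Lemma G_inPi m0 n0 (sg : 'S_m0.+1) (tu : 'S_n0.+1) N :
  inPi (fun b => if b.2 == N then mulW (pi_elem K sg) (pi_elem K tu) b else 0).
Proof.
case hc: ((m0 <= N) && (N + (N.+1 - m0) %% N.+1 == n0))%N; last first.
  exists [::] => [[u N']] /=; rewrite big_nil; case: eqP => // ->.
  by rewrite mulW_pi andbA hc.
have hN : (N <= m0 + n0)%N by case/andP: hc => _ /eqP <-; lia.
pose Q := fun pi : 'S_N.+1 => has (fun v => inS sg tu v && (prodw N v == pi)) (words (inv pi) N).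
pose r := [seq pi <- index_enum {perm 'I_N.+1} | Q pi].
exists (map (fun pi => (1, existT (fun n => 'S_n.+1) N pi)) r) => [[u N']].
rewrite big_map /=.
case: (eqVneq N' N) => [->|ne] /=; last first.
  by apply/esym/big1 => pi _; rewrite /pi_elem /= (negbTE ne) mulr0.
rewrite mulW_pi andbA hc /=.
have ur : uniq r by apply: filter_uniq; exact: index_enum_uniq.
case hS: (inS sg tu u && all (inr N) u).
- case/andP: hS => hS1 hA; have hred := thmA hN hS1 hA.
  set pi0 := prodw N u in hred.
  have [_ _ sz] := redP hred.
  have hin : pi0 \in r.
    rewrite mem_filter mem_index_enum andbT /Q; apply/hasP; exists u.
      by rewrite mem_words sz eqxx hA.
    by rewrite hS1 eqxx.
  rewrite (bigD1_seq pi0) //= /pi_elem /= eqxx hred mulr1 big1_seq ?addr0 //.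
  move=> pi /andP[hne _]; case hr: (reduced pi u); last by rewrite andbF mulr0.
  have [_ e _] := redP hr; by move: hne; rewrite /pi0 e eqxx.
- apply/esym; apply: big1_seq => pi /andP[_]; rewrite mem_filter => /andP[hQ _].
  rewrite /pi_elem /= eqxx /=; case hr: (reduced pi u); last by rewrite mulr0.
  exfalso; have [v hv /andP[hSv /eqP pv]] := hasP hQ.
  move: hv; rewrite mem_words => /andP[/eqP sv av].
  have hvred : reduced pi v by apply: red_of.
  have := thmB hN erefl hvred hr hSv.
  have [au _ _] := redP hr.
  by move: hS; rewrite au andbT => ->.
Qed.

Lemma mulW_pe_inPi (p q : SymAll) :
  inPi (mulW (pi_elem K (projT2 p)) (pi_elem K (projT2 q))).
Proof.
case: p => m0 sg; case: q => n0 tu /=.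
apply: (@inPi_ext K (fun b => \sum_(N <- iota 0 n0.+1)
   1 * (if b.2 == N then mulW (pi_elem K sg) (pi_elem K tu) b else 0))).
  move=> [u N'] /=; case: (leqP N' n0) => hN'.
    have hin : N' \in iota 0 n0.+1 by rewrite mem_iota; lia.
    rewrite (bigD1_seq N' hin (iota_uniq _ _)) /=.
    rewrite eqxx mul1r big1 ?addr0 // => N hne.
    by rewrite eq_sym (negbTE hne) mulr0.
  transitivity (0 : K).
    apply: big1_seq => N /andP[_]; rewrite -[0%N :: _]/(iota 0 n0.+1) mem_iota => hN.
    have -> : (N' == N) = false by apply/eqP; lia.
    by rewrite mulr0.
  rewrite mulW_pi; have -> : (N' + (N'.+1 - m0) %% N'.+1 == n0)%N = false by apply/eqP; lia.
  by rewrite andbF.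
by apply: inPi_sum => N; exact: G_inPi.
Qed.

Lemma comul_pe (p : SymAll) : inPiPi (comulW (pi_elem K (projT2 p))).
Proof.
case: p => n pi /=.
pose r := [seq st <- index_enum ({perm 'I_n.+1} * {perm 'I_n.+1})%type |
             ((st.1 * st.2)%g == pi) && (inv st.1 + inv st.2 == inv pi)%N].
exists (map (fun st => (1, (existT (fun n => 'S_n.+1) n st.1, existT (fun n => 'S_n.+1) n st.2))) r).
move=> [a1 n1] [b1 n2]; rewrite big_map /comulW /pi_elem /=.
case: (eqVneq n1 n) => [->|ne1]; last first.
  rewrite /= big1_seq; first by case: ifP.
  by move=> st _; rewrite mulr0 mul0r.
case: (eqVneq n2 n) => [_|ne2]; last first.
  rewrite /= big1_seq //.
  by move=> st _; rewrite mulr0.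
rewrite /=.
have ur : uniq r by apply: filter_uniq; exact: index_enum_uniq.
case hr: (reduced pi (a1 ++ b1)).
- have [h1 h2] := red_cat hr.
  have [_ p1 s1] := redP h1; have [_ p2 s2] := redP h2; have [_ p0 s0] := redP hr.
  have hin : (prodw n a1, prodw n b1) \in r.
    rewrite mem_filter mem_index_enum andbT /= -prodw_cat p0 eqxx /=.
    by rewrite -s1 -s2 -s0 size_cat.
  rewrite (bigD1_seq _ hin ur) /= h1 h2 !mulr1 big1_seq ?addr0 //.
  move=> [sg tu] /andP[hne _] /=.
  case e1: (reduced sg a1); last by rewrite mulr0 mul0r.
  case e2: (reduced tu b1); last by rewrite mulr0.
  have [_ q1 _] := redP e1; have [_ q2 _] := redP e2.
  by move: hne; rewrite q1 q2 eqxx.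
- apply/esym; apply: big1_seq => [[sg tu]] /andP[_]; rewrite mem_filter => /andP[/andP[/eqP c1 /eqP c2] _] /=.
  case e1: (reduced sg a1); last by rewrite mulr0 mul0r.
  case e2: (reduced tu b1); last by rewrite mulr0.
  by move: hr; rewrite (red_cat_intro e1 e2 c1 c2).
Qed.

Lemma reduced1 w : reduced (1%g : 'S_0.+1) w = (w == [::]).
Proof.
rewrite reducedE; case: w => [|i w] /=; first by rewrite prodw_nil inv1 !eqxx.
by rewrite /inr; have -> : (0 < i <= 0)%N = false by lia.
Qed.

End Main2.

Theorem theorem4p1 (K : fieldType) :
  [/\ inPi (unitW K),
      (forall x y : Wt K, inPi x -> inPi y -> inPi (mulW x y)),
      (forall x : Wt K, inPi x -> inPiPi (comulW x)) &
      (forall (d : nat) (x : Wt K), inPi x -> inPi (homog d x))].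
Proof.
split.
- exists [:: (1%R, existT (fun n => 'S_n.+1) 0%N 1%g)] => [[w n]].
  rewrite big_seq1 mul1r /unitW /pi_elem /= reduced1.
  by rewrite andbC.
- move=> x y [s hs] [t ht].
  apply: (@inPi_ext K (fun b => \sum_(p <- s) p.1 * (\sum_(q <- t) q.1 *
      mulW (pi_elem K (projT2 p.2)) (pi_elem K (projT2 q.2)) b))%R).
    move=> b.
    have -> : x = (fun b => \sum_(p <- s) p.1 * pi_elem K (projT2 p.2) b)%R.
      exact: functional_extensionality.
    have -> : y = (fun b => \sum_(q <- t) q.1 * pi_elem K (projT2 q.2) b)%R.
      exact: functional_extensionality.
    rewrite mulW_linl; apply: eq_bigr => p _; by rewrite mulW_linr.
  apply: inPi_sum => p; apply: inPi_sum => q; exact: mulW_pe_inPi.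
- move=> x [s hs].
  apply: (@inPiPi_ext K (fun a b => \sum_(p <- s) p.1 * comulW (pi_elem K (projT2 p.2)) a b)%R).
    move=> a b; rewrite /comulW; case: (a.2 == b.2) => /=; first by rewrite hs.
    by rewrite big1 // => p _; rewrite GRing.mulr0.
  by apply: inPiPi_sum => p; exact: comul_pe.
- move=> d x [s hs].
  apply: (@inPi_ext K (fun b => \sum_(p <- s)
     (p.1 * (if inv (projT2 p.2) == d then 1 else 0)) * pi_elem K (projT2 p.2) b)%R).
    move=> [w n0] /=; rewrite /homog hs /=.
    case: (eqVneq (size w) d) => [e|ne].
      apply: eq_bigr => [[c [n pi]]] _ /=; rewrite /pi_elem /=.
      case hr: (reduced pi w); rewrite ?andbF ?GRing.mulr0 //.
      by have [_ _ sz] := redP hr; rewrite -sz e eqxx GRing.mulr1.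
    apply: big1 => [[c [n pi]]] _ /=; rewrite /pi_elem /=.
    case hr: (reduced pi w); rewrite ?andbF ?GRing.mulr0 //.
    by have [_ _ sz] := redP hr; rewrite -sz (negbTE ne) GRing.mulr0 GRing.mul0r.
  by apply: inPi_sum => p; exact: inPi_pe.
Qed.
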